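(* Let $i\neq j\in I$, let $Z_0$ be an irreducible component of $\Lambda_{\mathbf V'}$ with $t_i^*(Z_0)=0$, let $c\in\mathbb N$, and let $Z=\eta^*_{i,c}(Z_0)$. Then $t_j(Z)=t_j(Z_0)$.
   Context: Symmetric Cartan datum $(I,(-,-))$ with loop-free graph; $H$ the set of oriented edges $h:h'\to h''$, reversal $\bar h$; $\epsilon:H\to\mathbb C^*$ with $\epsilon(h)+\epsilon(\bar h)=0$. For an $I$-graded complex space $\mathbf V$: $\mathbf E_{\mathbf V}=\bigoplus_{h\in H}\mathrm{Hom}(\mathbf V_{h'},\mathbf V_{h''})$, $\mu(x)_i=\sum_{h''=i}\epsilon(h)x_hx_{\bar h}$, $\Lambda_{\mathbf V}$ = nilpotent $x$ with $\mu(x)=0$. Let $\Lambda_{\mathbf V,j,p}=\{x\in\Lambda_{\mathbf V}:\operatorname{codim}_{\mathbf V_j}\operatorname{Im}\bigoplus_{h\in H,h''=j}x_h=p\}$ and $\Lambda^p_{\mathbf V,i}=\{x:\dim\ker\bigoplus_{h\in H,h'=i}x_h=p\}$; for $Z\in\operatorname{Irr}\Lambda_{\mathbf V}$, $t_j(Z)$ (resp. $t_i^*(Z)$) is the $p$ with $Z\cap\Lambda_{\mathbf V,j,p}$ (resp. $Z\cap\Lambda^p_{\mathbf V,i}$) dense in $Z$. For $|\mathbf V|=|\mathbf V'|+|\mathbf V''|$: $\Lambda''=\{(x,\tilde{\mathbf W})\}$ ($x\in\Lambda_{\mathbf V}$, $\tilde{\mathbf W}$ $x$-stable, $|\tilde{\mathbf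 W}|=|\mathbf V''|$), $\Lambda'$ adds isomorphisms $\rho_1:\mathbf V/\tilde{\mathbf W}\cong\mathbf V'$, $\rho_2:\tilde{\mathbf W}\cong\mathbf V''$, $p(x,\tilde{\mathbf W},\rho_1,\rho_2)=(\rho_1\bar x\rho_1^{-1},\rho_2x|_{\tilde{\mathbf W}}\rho_2^{-1})$, $r$ forgets $\rho$'s, $q(x,\tilde{\mathbf W})=x$. If $|\mathbf V''|=ci$ and $Z'\in\operatorname{Irr}\Lambda_{\mathbf V'}$ with $t_i^*(Z')=0$, $\eta^*_{i,c}(Z')$ is the closure of $qrp^{-1}((Z'\cap\Lambda^0_{\mathbf V',i})\times\Lambda_{\mathbf V''})$, an irreducible component of $\Lambda_{\mathbf V}$ with $t_i^*=c$ ($\eta^*_{i,c}$ is a bijection onto $\{t_i^*=c\}$). *)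

(* Defs.v *)
From HB Require Import structures.
From mathcomp Require Import all_boot all_order all_algebra.
From mathcomp Require Import reals.
From mathcomp Require Import complex.
Set Implicit Arguments. Unset Strict Implicit. Unset Printing Implicit Defensive.
Import Order.TTheory GRing.Theory Num.Theory.
Local Open Scope ring_scope.

(* The set I = 'I_r of vertices; H the set of oriented edges of a      *)
(* loop-free graph, with source h', target h'' and reversal h |-> \bar h. *)
Record dgraph (r : nat) := DGraph {
  edge : finType;
  src : edge -> 'I_r;
  tgt : edge -> 'I_r;
  erev : edge -> edge;
  revK : involutive erev;
  src_rev : forall h, src (erev h) = tgt h;
  tgt_rev : forall h, tgt (erev h) = src h;
  noloop : forall h, src h != tgt h }.

Definition Rep (C : Type) (r : nat) (Q : dgraph r) (v : 'I_r -> nat) :=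
  forall h : edge Q, 'M[C]_(v (tgt h), v (src h)).

Section Quiver.
Variable R : realType.
Local Notation C := (complex R).
Variables (r : nat) (Q : dgraph r).
Variable eps : edge Q -> C.

Section Dim.
Variable v : 'I_r -> nat.

Inductive polyfun : (Rep C Q v -> C) -> Prop :=
| pf_const (c : C) : polyfun (fun _ => c)
| pf_coord (h : edge Q) (a : 'I_(v (tgt h))) (b : 'I_(v (src h))) :
    polyfun (fun x => x h a b)
| pf_add f g : polyfun f -> polyfun g -> polyfun (fun x => f x + g x)
| pf_mul f g : polyfun f -> polyfun g -> polyfun (fun x => f x * g x).

Definition zclosed (S : Rep C Q v -> Prop) : Prop :=
  exists F : (Rep C Q v -> C) -> Prop,
    (forall f, F f -> polyfun f) /\
    (forall x, S x <-> (forall f, F f -> f x = 0)).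

Definition zcl (S : Rep C Q v -> Prop) : Rep C Q v -> Prop :=
  fun x => forall T, zclosed T -> (forall y, S y -> T y) -> T x.

Definition dense_in (A Z : Rep C Q v -> Prop) : Prop :=
  forall x, Z x -> zcl A x.

Definition irreducible (Z : Rep C Q v -> Prop) : Prop :=
  (exists x, Z x) /\
  forall A B, zclosed A -> zclosed B ->
    (forall x, Z x -> A x \/ B x) ->
    (forall x, Z x -> A x) \/ (forall x, Z x -> B x).

Definition irr_component (L Z : Rep C Q v -> Prop) : Prop :=
  irreducible Z /\ (forall x, Z x -> L x) /\
  forall Z', irreducible Z' -> (forall x, Z x -> Z' x) ->
     (forall x, Z' x -> L x) -> forall x, Z' x <-> Z x.

(* x_h placed as a block of an endomorphism of V = (+)_k V_k *)
Definition bigmx (x : Rep C Q v) (h : edge Q) : 'M[C]_(\sum_(k < r) v k) :=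
  \mxblock_(a < r, b < r)
     (if (a == tgt h) && (b == src h) then conform_mx 0 (x h) else 0).

Definition nilpotent (x : Rep C Q v) : Prop :=
  exists N : nat, forall s : seq (edge Q), size s = N ->
    foldr (fun h M => bigmx x h *m M) 1%:M s = 0.

(* moment map mu(x)_k = sum_{h'' = k} eps(h) x_h x_{\bar h} *)
Definition mu (x : Rep C Q v) (k : 'I_r) : 'M[C]_(v k) :=
  \sum_(h | tgt h == k)
     conform_mx 0 (eps h *: (x h *m conform_mx (0 : 'M_(v (src h), v (tgt h)))
                                                 (x (erev h)))).

Definition Lambda (x : Rep C Q v) : Prop :=
  nilpotent x /\ forall k, mu x k = 0.

(* codim_{V_j} Im (+)_{h''=j} x_h *)
Definition im_codim (x : Rep C Q v) (j : 'I_r) : nat :=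
  (v j - \rank (\sum_(h | tgt h == j)
      <<conform_mx (0 : 'M_(v (src h), v j)) (x h)^T>>)%MS)%N.

(* dim ker (+)_{h'=i} x_h *)
Definition ker_dim (x : Rep C Q v) (i : 'I_r) : nat :=
  \rank (\bigcap_(h | src h == i)
      kermx (conform_mx (0 : 'M_(v i, v (tgt h))) (x h)^T))%MS.

Definition Lambda_jp (j : 'I_r) (p : nat) (x : Rep C Q v) : Prop :=
  Lambda x /\ im_codim x j = p.

Definition Lambda_ip (i : 'I_r) (p : nat) (x : Rep C Q v) : Prop :=
  Lambda x /\ ker_dim x i = p.

(* "t_j(Z) = p" : Z cap Lambda_{V,j,p} is dense in Z *)
Definition t_is (j : 'I_r) (Z : Rep C Q v -> Prop) (p : nat) : Prop :=
  dense_in (fun x => Z x /\ Lambda_jp j p x) Z.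

(* "t_i^*(Z) = p" : Z cap Lambda^p_{V,i} is dense in Z *)
Definition tstar_is (i : 'I_r) (Z : Rep C Q v -> Prop) (p : nat) : Prop :=
  dense_in (fun x => Z x /\ Lambda_ip i p x) Z.

End Dim.

(* |V''| = c i, |V| = |V'| + |V''|; V_k = V'_k (+) V''_k in coordinates *)
Definition dimC (i : 'I_r) (c : nat) : 'I_r -> nat :=
  fun k => if k == i then c else 0%N.

Definition dimsum (v' v'' : 'I_r -> nat) : 'I_r -> nat :=
  fun k => (v' k + v'' k)%N.

Definition gact (v : 'I_r -> nat) (g : forall k, 'M[C]_(v k)) (x : Rep C Q v)
  : Rep C Q v := fun h => g (tgt h) *m x h *m invmx (g (src h)).

(* q r p^{-1}(A x B): the x in Lambda_V admitting an x-stable graded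
   subspace W with |W| = |V''| and isomorphisms rho_1 : V/W ~ V',
   rho_2 : W ~ V'' with (rho_1 xbar rho_1^-1, rho_2 x|_W rho_2^-1) in A x B.
   Coordinates: W = g^{-1}(0 (+) V''), rho_1, rho_2 induced by g.      *)
Definition qrp_inv (v' v'' : 'I_r -> nat)
    (A : Rep C Q v' -> Prop) (B : Rep C Q v'' -> Prop)
    (x : Rep C Q (dimsum v' v'')) : Prop :=
  Lambda x /\
  exists g : forall k, 'M[C]_(v' k + v'' k),
    (forall k, g k \in unitmx) /\
    let y := gact (v := dimsum v' v'') g x in
    (forall h, ursubmx (y h) = 0) /\           (* W is x-stable *)
    A (fun h => ulsubmx (y h)) /\               (* induced map on V/W *)
    B (fun h => drsubmx (y h)).                 (* restriction to W *)

Definition eta_star (i : 'I_r) (c : nat) (v' : 'I_r -> nat)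
    (Z0 : Rep C Q v' -> Prop) : Rep C Q (dimsum v' (dimC i c)) -> Prop :=
  zcl (qrp_inv (fun x => Z0 x /\ Lambda_ip i 0 x) (@Lambda (dimC i c))).

End Quiver.
Arguments eta_star {R r Q} eps i c {v'} Z0 _.

(* Main.v *)
Require Import Defs.
From mathcomp Require Import all_boot all_order all_algebra.
From mathcomp Require Import reals.
From mathcomp Require Import complex.
From Stdlib Require Import Classical FunctionalExtensionality.
Set Implicit Arguments. Unset Strict Implicit. Unset Printing Implicit Defensive.
Import GRing.Theory Num.Theory.
Local Open Scope ring_scope.
Section Topo.
Variables (R : realType) (r : nat) (Q : dgraph r).
Local Notation C := (complex R).
Variable v : 'I_r -> nat.
Local Notation Rp := (Rep C Q v).

Lemma zcl_sub (S : Rp -> Prop) x : S x -> zcl S x.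
Proof. by move=> Sx T _ ST; exact: ST. Qed.

Lemma zcl_min (S T : Rp -> Prop) : zclosed T -> (forall y, S y -> T y) ->
  forall x, zcl S x -> T x.
Proof. by move=> cT ST x; apply. Qed.

Lemma zcl_closed (S : Rp -> Prop) : zclosed (zcl S).
Proof.
exists (fun f => exists T, exists FT : (Rp -> C) -> Prop,
   (forall g, FT g -> polyfun g) /\ (forall x, T x <-> forall g, FT g -> g x = 0)
   /\ (forall y, S y -> T y) /\ FT f).
split.
  by move=> f [T [FT [H1 [H2 [H3 H4]]]]]; exact: H1.
move=> x; split.
  move=> Hx f [T [FT [H1 [H2 [H3 H4]]]]].
  have Tx : T x by apply: Hx => //; exists FT.
  by move/H2: Tx; apply.
move=> H T [FT [H1 H2]] ST; apply/H2 => g FTg.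
by apply: H; exists T, FT.
Qed.

Lemma zcl_mono (S S' : Rp -> Prop) : (forall y, S y -> S' y) ->
  forall x, zcl S x -> zcl S' x.
Proof.
move=> SS' x Hx; apply: (zcl_min (zcl_closed S')) Hx => y Sy.
by apply: zcl_sub; apply: SS'.
Qed.

Lemma zclosed_union (A B : Rp -> Prop) : zclosed A -> zclosed B ->
  zclosed (fun x => A x \/ B x).
Proof.
move=> [FA [pA hA]] [FB [pB hB]].
exists (fun f => exists g1 g2, FA g1 /\ FB g2 /\ f = (fun x => g1 x * g2 x)).
split.
  by move=> f [g1 [g2 [H1 [H2 ->]]]]; apply: pf_mul; [apply: pA|apply: pB].
move=> x; split.
  move=> [/hA Ax|/hB Bx] f [g1 [g2 [H1 [H2 ->]]]].
    by rewrite (Ax _ H1) mul0r.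
  by rewrite (Bx _ H2) mulr0.
move=> H; apply: NNPP => /not_or_and [nA nB].
have [g1 [H1 n1]] : exists g1, FA g1 /\ g1 x <> 0.
  apply: NNPP => Hn; apply: nA; apply/hA => g Hg; apply: NNPP => Hgx.
  by apply: Hn; exists g.
have [g2 [H2 n2]] : exists g2, FB g2 /\ g2 x <> 0.
  apply: NNPP => Hn; apply: nB; apply/hB => g Hg; apply: NNPP => Hgx.
  by apply: Hn; exists g.
have := H (fun x => g1 x * g2 x); rewrite /=.
move=> /(_ (ex_intro _ g1 (ex_intro _ g2 (conj H1 (conj H2 erefl))))) /eqP.
by rewrite mulf_eq0 => /orP [/eqP|/eqP].
Qed.

Lemma zclosed_empty : zclosed (fun _ : Rp => False).
Proof.
exists (fun f => f = (fun _ => 1)); split; first by move=> f ->; apply: pf_const.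
move=> x; split => // /(_ _ erefl) /eqP; by rewrite oner_eq0.
Qed.

Lemma zcl_nonempty (S : Rp -> Prop) x : zcl S x -> exists y, S y.
Proof.
move=> Hx; apply: NNPP => Hn.
apply: (zcl_min zclosed_empty _ Hx) => y Sy; apply: Hn; by exists y.
Qed.

Lemma polyfun_ext (f g : Rp -> C) : polyfun f -> (forall x, f x = g x) -> polyfun g.
Proof.
by move=> pf e; have -> : g = f by apply: functional_extensionality => x; rewrite e.
Qed.

Lemma polyfun_sum (I : Type) (s : seq I) (P : pred I) (F : I -> Rp -> C) :
  (forall i, polyfun (F i)) -> polyfun (fun x => \sum_(i <- s | P i) F i x).
Proof.
move=> HF; elim: s => [|a s IH].
  by apply: (polyfun_ext (pf_const _ _ _)) => x; rewrite big_nil.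
case Pa: (P a).
  by apply: (polyfun_ext (pf_add (HF a) IH)) => x; rewrite big_cons Pa.
by apply: (polyfun_ext IH) => x; rewrite big_cons Pa.
Qed.

Lemma polyfun_prod (I : Type) (s : seq I) (P : pred I) (F : I -> Rp -> C) :
  (forall i, polyfun (F i)) -> polyfun (fun x => \prod_(i <- s | P i) F i x).
Proof.
move=> HF; elim: s => [|a s IH].
  by apply: (polyfun_ext (pf_const _ _ _)) => x; rewrite big_nil.
case Pa: (P a).
  by apply: (polyfun_ext (pf_mul (HF a) IH)) => x; rewrite big_cons Pa.
by apply: (polyfun_ext IH) => x; rewrite big_cons Pa.
Qed.

Lemma polyfun_opp (f : Rp -> C) : polyfun f -> polyfun (fun x => - f x).
Proof.
move=> pf; apply: (polyfun_ext (pf_mul (pf_const _ _ (-1)) pf)) => x.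
by rewrite mulN1r.
Qed.

Definition pmx m n (X : Rp -> 'M[C]_(m, n)) := forall a b, polyfun (fun x => X x a b).

Lemma pmx_const m n (A : 'M[C]_(m, n)) : pmx (fun _ => A).
Proof. by move=> a b; apply: pf_const. Qed.

Lemma pmx_coord h : pmx (fun x : Rp => x h).
Proof. by move=> a b; apply: pf_coord. Qed.

Lemma pmx_ext m n (X Y : Rp -> 'M[C]_(m, n)) : pmx X -> (forall x, X x = Y x) -> pmx Y.
Proof. by move=> pX e a b; apply: (polyfun_ext (pX a b)) => x; rewrite e. Qed.

Lemma pmx_add m n (X Y : Rp -> 'M[C]_(m, n)) : pmx X -> pmx Y -> pmx (fun x => X x + Y x).
Proof.
by move=> pX pY a b; apply: (polyfun_ext (pf_add (pX a b) (pY a b))) => x; rewrite mxE.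
Qed.

Lemma pmx_opp m n (X : Rp -> 'M[C]_(m, n)) : pmx X -> pmx (fun x => - X x).
Proof.
by move=> pX a b; apply: (polyfun_ext (polyfun_opp (pX a b))) => x; rewrite mxE.
Qed.

Lemma pmx_scale m n (f : Rp -> C) (X : Rp -> 'M[C]_(m, n)) :
  polyfun f -> pmx X -> pmx (fun x => f x *: X x).
Proof.
by move=> pf pX a b; apply: (polyfun_ext (pf_mul pf (pX a b))) => x; rewrite mxE.
Qed.

Lemma pmx_mul m n p (X : Rp -> 'M[C]_(m, n)) (Y : Rp -> 'M[C]_(n, p)) :
  pmx X -> pmx Y -> pmx (fun x => X x *m Y x).
Proof.
move=> pX pY a b.
apply: (polyfun_ext (@polyfun_sum _ (index_enum 'I_n) xpredT
   (fun k x => X x a k * Y x k b) (fun k => pf_mul (pX a k) (pY k b)))) => x.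
by rewrite mxE.
Qed.

Lemma pmx_tr m n (X : Rp -> 'M[C]_(m, n)) : pmx X -> pmx (fun x => (X x)^T).
Proof. by move=> pX a b; apply: (polyfun_ext (pX b a)) => x; rewrite mxE. Qed.

Lemma conform_entry m n m' n' (B : 'M[C]_(m', n')) a b :
  (exists a' b', forall A : 'M[C]_(m, n), conform_mx B A a b = A a' b') \/
  (forall A : 'M[C]_(m, n), conform_mx B A a b = B a b).
Proof.
rewrite /conform_mx.
case: (m =P m') => [em|nem]; case: (n =P n') => [en|nen].
- left; exists (cast_ord (esym em) a), (cast_ord (esym en) b) => A.
  by rewrite castmxE.
- by right.
- by right.
- by right.
Qed.

Lemma pmx_conform m n m' n' (B : 'M[C]_(m', n')) (X : Rp -> 'M[C]_(m, n)) :
  pmx X -> pmx (fun x => conform_mx B (X x)).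
Proof.
move=> pX a b; case: (@conform_entry m n m' n' B a b) => [[a' [b' e]]|e].
  by apply: (polyfun_ext (pX a' b')) => x; rewrite e.
by apply: (polyfun_ext (pf_const _ _ (B a b))) => x; rewrite e.
Qed.

Lemma pmx_block m1 m2 n1 n2 (A : Rp -> 'M[C]_(m1, n1)) (B : Rp -> 'M[C]_(m1, n2))
  (Cc : Rp -> 'M[C]_(m2, n1)) (D : Rp -> 'M[C]_(m2, n2)) :
  pmx A -> pmx B -> pmx Cc -> pmx D -> pmx (fun x => block_mx (A x) (B x) (Cc x) (D x)).
Proof.
move=> pA pB pC pD a b.
have e : forall x, block_mx (A x) (B x) (Cc x) (D x) a b =
  match split a with
  | inl a' => match split b with inl b' => A x a' b' | inr b' => B x a' b' end
  | inr a' => match split b with inl b' => Cc x a' b' | inr b' => D x a' b' end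
  end.
  move=> x; rewrite /block_mx [in LHS]mxE.
  by case: (split a) => a'; rewrite mxE; case: (split b).
apply: (polyfun_ext _ (fun x => esym (e x))).
by case: (split a) => a'; case: (split b) => b'.
Qed.

Lemma pmx_sum (I : Type) (s : seq I) (P : pred I) m n (F : I -> Rp -> 'M[C]_(m, n)) :
  (forall i, pmx (F i)) -> pmx (fun x => \sum_(i <- s | P i) F i x).
Proof.
move=> pF a b; apply: (polyfun_ext (@polyfun_sum _ s P (fun i x => F i x a b) (fun i => pF i a b))).
by move=> x; rewrite summxE.
Qed.

Lemma pmx_det n (X : Rp -> 'M[C]_n) : pmx X -> polyfun (fun x => \det (X x)).
Proof.
move=> pX; rewrite /determinant.
apply: polyfun_sum => s; apply: pf_mul; first exact: pf_const.
by apply: polyfun_prod => i; apply: pX.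
Qed.

Lemma pmx_adj n (X : Rp -> 'M[C]_n) : pmx X -> pmx (fun x => \adj (X x)).
Proof.
move=> pX a b; apply: (polyfun_ext (f := fun x => cofactor (X x) b a)); last first.
  by move=> x; rewrite mxE.
rewrite /cofactor; apply: pf_mul; first exact: pf_const.
apply: pmx_det => c d; apply: (polyfun_ext (pX (lift b c) (lift a d))) => x.
by rewrite !mxE.
Qed.

Lemma pmx_sub m n m' n' (f : 'I_m' -> 'I_m) (g : 'I_n' -> 'I_n) (X : Rp -> 'M[C]_(m, n)) :
  pmx X -> pmx (fun x => mxsub f g (X x)).
Proof. by move=> pX a b; apply: (polyfun_ext (pX (f a) (g b))) => x; rewrite mxE. Qed.

End Topo.

Section Comp.
Variables (R : realType) (r : nat) (Q : dgraph r).
Local Notation C := (complex R).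
Variables v1 v2 : 'I_r -> nat.
Variable phi : Rep C Q v1 -> Rep C Q v2.
Hypothesis hphi : forall h a b, polyfun (fun z => phi z h a b).

Lemma polyfun_comp (f : Rep C Q v2 -> C) : polyfun f -> polyfun (fun z => f (phi z)).
Proof.
elim=> [c|h a b|f1 g1 _ Hf _ Hg|f1 g1 _ Hf _ Hg].
- exact: pf_const.
- exact: hphi.
- exact: pf_add.
- exact: pf_mul.
Qed.

Lemma zclosed_preim (T : Rep C Q v2 -> Prop) : zclosed T -> zclosed (fun z => T (phi z)).
Proof.
move=> [F [pF hF]].
exists (fun g => exists f, F f /\ g = (fun z => f (phi z))); split.
  by move=> g [f [Ff ->]]; apply: polyfun_comp; apply: pF.
move=> z; split.
  by move=> /hF Tz g [f [Ff ->]]; apply: Tz.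
by move=> H; apply/hF => f Ff; apply: (H (fun z => f (phi z))); exists f.
Qed.
End Comp.

Section Minors.
Variable F : fieldType.

Lemma colsub_tr m n n' (g : 'I_n' -> 'I_n) (A : 'M[F]_(m, n)) :
  colsub g A = (rowsub g A^T)^T.
Proof. by apply/matrixP => a b; rewrite !mxE. Qed.

Lemma rank_mxsub_le m n k l (f : 'I_k -> 'I_m) (g : 'I_l -> 'I_n) (A : 'M[F]_(m, n)) :
  (\rank (mxsub f g A) <= \rank A)%N.
Proof.
rewrite mxsubrc; apply: leq_trans (mxrankS (rowsub_sub _ _)) _.
by rewrite colsub_tr mxrank_tr -[X in (_ <= X)%N]mxrank_tr mxrankS // rowsub_sub.
Qed.

Lemma rank_le_minors a b (A : 'M[F]_(a, b)) m :
  (\rank A <= m)%N <-> (forall k (f : 'I_k -> 'I_a) (g : 'I_k -> 'I_b),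
                         (m < k)%N -> \det (mxsub f g A) = 0).
Proof.
split.
  move=> rA k f g mk; apply/eqP; apply: contraTT mk => d0.
  have : mxsub f g A \in unitmx by rewrite unitmxE unitfE.
  move/mxrank_unit => e; rewrite -leqNgt.
  by rewrite -{1}e (leq_trans (rank_mxsub_le _ _ _)).
move=> H; rewrite leqNgt; apply/negP => mlt.
pose f := maxrankfun A.
pose B := rowsub f A.
have rB : row_full B^T.
  rewrite /row_full mxrank_tr.
  by move: (maxrowsub_free A); rewrite /row_free.
pose g := fullrankfun rB.
have u := fullrowsub_unit rB.
have e : (rowsub g B^T)^T = mxsub f g A.
  by apply/matrixP => x y; rewrite !mxE.
have := H _ f g mlt; rewrite -e det_tr => d0.
by move: u; rewrite unitmxE d0 unitr0.
Qed.
End Minors.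

Section Rank.
Variables (R : realType) (r : nat) (Q : dgraph r).
Local Notation C := (complex R).
Variable v : 'I_r -> nat.
Local Notation Rp := (Rep C Q v).
Variable j : 'I_r.

Definition RS (x : Rp) : 'M[C]_(v j) :=
  (\sum_(h | tgt h == j) <<conform_mx (0 : 'M_(v (src h), v j)) (x h)^T>>)%MS.

Definition rk (x : Rp) := \rank (RS x).

Lemma im_codimE x : im_codim x j = (v j - rk x)%N.
Proof. by []. Qed.

Lemma rk_le x : (rk x <= v j)%N.
Proof. exact: rank_leq_col. Qed.

Definition Ah (x : Rp) h : 'M[C]_(v (src h), v j) :=
  if tgt h == j then conform_mx (0 : 'M_(v (src h), v j)) (x h)^T else 0.

Local Notation TT := {h : edge Q & 'I_(v (src h))}.

Definition BigM (x : Rp) : 'M[C]_(#|{: TT}|, v j) :=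
  \matrix_(t, c) Ah x (tag (enum_val t)) (tagged (enum_val t)) c.

Lemma BigM_eq x : (BigM x :=: RS x)%MS.
Proof.
apply/eqmxP/andP; split.
  apply/row_subP => t.
  have -> : row t (BigM x) = row (tagged (enum_val t)) (Ah x (tag (enum_val t))).
    by apply/rowP => c; rewrite !mxE.
  rewrite /Ah; case: ifP => e; last by rewrite row0 sub0mx.
  apply: submx_trans (row_sub _ _) _.
  by rewrite -genmxE (sumsmx_sup (tag (enum_val t))).
apply/sumsmx_subP => h e; rewrite genmxE; apply/row_subP => k.
have -> : row k (conform_mx (0 : 'M_(v (src h), v j)) (x h)^T) =
          row (enum_rank (Tagged (fun h => 'I_(v (src h))) k)) (BigM x).
  by apply/rowP => c; rewrite !mxE enum_rankK /= /Ah e.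
exact: row_sub.
Qed.

Lemma rkE x : rk x = \rank (BigM x).
Proof. by rewrite /rk -(BigM_eq x). Qed.

End Rank.

Section RankClosed.
Variables (R : realType) (r : nat) (Q : dgraph r).
Local Notation C := (complex R).
Variable v : 'I_r -> nat.
Local Notation Rp := (Rep C Q v).
Variable j : 'I_r.

Lemma pmx_Ah h : pmx (fun x : Rp => Ah j x h).
Proof.
rewrite /Ah; case: (tgt h == j); last exact: pmx_const.
by apply: pmx_conform; apply: pmx_tr; apply: pmx_coord.
Qed.

Lemma pmx_BigM : pmx (fun x : Rp => BigM j x).
Proof.
move=> t c; have H := @pmx_Ah (tag (enum_val t)) (tagged (enum_val t)) c.
apply: (polyfun_ext H) => x; by rewrite /BigM mxE.
Qed.

Lemma closed_rk_le m : zclosed (fun x : Rp => (rk j x <= m)%N).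
Proof.
exists (fun f => exists k (f0 : 'I_k -> 'I_#|{: {h : edge Q & 'I_(v (src h))}}|)
            (g : 'I_k -> 'I_(v j)), (m < k)%N /\ f = (fun x => \det (mxsub f0 g (BigM j x)))).
split.
  move=> f [k [f0 [g [_ ->]]]]; apply: pmx_det; apply: pmx_sub; exact: pmx_BigM.
move=> x; rewrite rkE rank_le_minors; split.
  by move=> H f [k [f0 [g [mk ->]]]]; apply: H.
by move=> H k f0 g mk; apply: (H (fun x => \det (mxsub f0 g (BigM j x)))); exists k, f0, g.
Qed.
End RankClosed.

Section Helpers.
Variable F : fieldType.

Lemma conformE m n m' n' (B : 'M[F]_(m', n')) (A : 'M[F]_(m, n)) (em : m = m') (en : n = n') :
  conform_mx B A = castmx (em, en) A.
Proof. by subst; rewrite conform_mx_id castmx_id. Qed.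

Lemma conform0 m n m' n' : conform_mx (0 : 'M[F]_(m', n')) (0 : 'M[F]_(m, n)) = 0.
Proof.
case: (eqVneq m m') => em; last by rewrite nonconform_mx // em.
case: (eqVneq n n') => en; last by rewrite nonconform_mx // en orbT.
subst; exact: conform_mx_id.
Qed.

Lemma conform_conform m n m1 n1 m2 n2 (A : 'M[F]_(m, n)) :
  m = m1 -> n = n1 ->
  conform_mx (0 : 'M_(m2, n2)) (conform_mx (0 : 'M_(m1, n1)) A) = conform_mx 0 A.
Proof. by move=> e1 e2; subst; rewrite conform_mx_id. Qed.

Lemma conform_block m1 m2 n1 n2 m1' m2' n1' n2' (A : 'M[F]_(m1, n1)) (B : 'M_(m1, n2))
   (Cc : 'M_(m2, n1)) (D : 'M_(m2, n2)) :
  m1 = m1' -> m2 = m2' -> n1 = n1' -> n2 = n2' ->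
  conform_mx (0 : 'M_(m1' + m2', n1' + n2')) (block_mx A B Cc D) =
  block_mx (conform_mx (0 : 'M_(m1', n1')) A) (conform_mx (0 : 'M_(m1', n2')) B)
           (conform_mx (0 : 'M_(m2', n1')) Cc) (conform_mx (0 : 'M_(m2', n2')) D).
Proof. by move=> e1 e2 e3 e4; subst; rewrite !conform_mx_id. Qed.

Lemma conform_tr m n m' n' (A : 'M[F]_(m, n)) : m = m' -> n = n' ->
  (conform_mx (0 : 'M_(m', n')) A)^T = conform_mx (0 : 'M_(n', m')) A^T.
Proof. by move=> e1 e2; subst; rewrite !conform_mx_id. Qed.

Lemma conform_mulmx m n p m' p' (A : 'M[F]_(m, n)) (B : 'M[F]_(n, p)) : m = m' -> p = p' ->
  conform_mx (0 : 'M_(m', p')) (A *m B) =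
  conform_mx (0 : 'M_(m', n)) A *m conform_mx (0 : 'M_(n, p')) B.
Proof. by move=> e1 e2; subst; rewrite !conform_mx_id. Qed.

Lemma conform_scale m n m' n' a (A : 'M[F]_(m, n)) :
  conform_mx (0 : 'M_(m', n')) (a *: A) = a *: conform_mx (0 : 'M_(m', n')) A.
Proof.
case: (eqVneq m m') => em; last by rewrite !nonconform_mx ?scaler0 // em.
case: (eqVneq n n') => en; last by rewrite !nonconform_mx ?scaler0 // en orbT.
subst; by rewrite !conform_mx_id.
Qed.

Lemma flat0 m n (e : m = 0%N) (A : 'M[F]_(m, n)) : A = 0.
Proof. by subst; rewrite flatmx0. Qed.

Lemma thin0 m n (e : n = 0%N) (A : 'M[F]_(m, n)) : A = 0.
Proof. by subst; rewrite thinmx0. Qed.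

Lemma sum_block (I : Type) (s : seq I) (P : pred I) m1 m2 n1 n2
  (A : I -> 'M[F]_(m1, n1)) (B : I -> 'M_(m1, n2)) (Cc : I -> 'M_(m2, n1)) (D : I -> 'M_(m2, n2)) :
  \sum_(i <- s | P i) block_mx (A i) (B i) (Cc i) (D i) =
  block_mx (\sum_(i <- s | P i) A i) (\sum_(i <- s | P i) B i)
           (\sum_(i <- s | P i) Cc i) (\sum_(i <- s | P i) D i).
Proof.
elim: s => [|a s IH]; first by rewrite !big_nil block_mx0.
rewrite !big_cons; case: (P a) => //; by rewrite IH add_block_mx.
Qed.
End Helpers.

Section Gauge.
Variables (R : realType) (r : nat) (Q : dgraph r).
Local Notation C := (complex R).
Variable eps : edge Q -> C.
Variable v : 'I_r -> nat.
Local Notation Rp := (Rep C Q v).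
Variable g : forall k, 'M[C]_(v k).
Hypothesis gu : forall k, g k \in unitmx.

Lemma conj_conform (k1 k2 k3 k4 : 'I_r) (e1 : k1 = k3) (e2 : k2 = k4) (Y : 'M[C]_(v k1, v k2)) :
  conform_mx (0 : 'M_(v k3, v k4)) (g k1 *m Y *m invmx (g k2)) =
  g k3 *m conform_mx (0 : 'M_(v k3, v k4)) Y *m invmx (g k4).
Proof. by subst; rewrite !conform_mx_id. Qed.

Lemma mu_gact (x : Rp) k : mu eps (gact g x) k = g k *m mu eps x k *m invmx (g k).
Proof.
rewrite /mu mulmx_sumr mulmx_suml; apply: eq_bigr => h /eqP e.
rewrite /gact (conj_conform (tgt_rev h) (src_rev h)).
have -> : g (tgt h) *m x h *m invmx (g (src h)) *m
   (g (src h) *m conform_mx (0 : 'M_(v (src h), v (tgt h))) (x (erev h)) *m invmx (g (tgt h)))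
   = g (tgt h) *m (x h *m conform_mx (0 : 'M_(v (src h), v (tgt h))) (x (erev h))) *m invmx (g (tgt h)).
  rewrite !mulmxA; congr (_ *m _); rewrite -!mulmxA; congr (_ *m (_ *m _)).
  by rewrite !mulmxA mulVmx // mul1mx.
by rewrite scalemxAl scalemxAr (conj_conform e e).
Qed.

Lemma gactK (x : Rp) : gact (fun k => invmx (g k)) (gact g x) = x.
Proof.
apply: functional_extensionality_dep => h; rewrite /gact invmxK.
by rewrite !mulmxA mulVmx // mul1mx -mulmxA mulVmx // mulmx1.
Qed.

Lemma gactKV (x : Rp) : gact g (gact (fun k => invmx (g k)) x) = x.
Proof.
apply: functional_extensionality_dep => h; rewrite /gact invmxK.
by rewrite !mulmxA mulmxV // mul1mx -mulmxA mulmxV // mulmx1.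
Qed.
End Gauge.

Section Blocks.
Variables (R : realType) (r : nat) (Q : dgraph r).
Local Notation C := (complex R).

Definition sblk (p_ q_ : 'I_r -> nat) (h : edge Q) (X : 'M[C]_(p_ (tgt h), q_ (src h))) :
  'M[C]_(\sum_k p_ k, \sum_k q_ k) :=
  \mxblock_(a < r, b < r) (if (a == tgt h) && (b == src h) then conform_mx 0 X else 0).

Definition dblk (p_ q_ : 'I_r -> nat) (D : forall k, 'M[C]_(p_ k, q_ k)) :
  'M[C]_(\sum_k p_ k, \sum_k q_ k) :=
  \mxblock_(a < r, b < r) (if a == b then conform_mx 0 (D a) else 0).

Lemma sblk_dblk (p_ q_ r_ : 'I_r -> nat) h (X : 'M[C]_(p_ (tgt h), q_ (src h)))
  (D : forall k, 'M[C]_(q_ k, r_ k)) :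
  sblk X *m dblk D = sblk (X *m D (src h)).
Proof.
rewrite /sblk /dblk mul_mxblock; apply: eq_mxblock => a c.
rewrite (bigD1 c) //= big1 => [|b nb]; last by rewrite (negPf nb) mulmx0.
rewrite eqxx addr0.
case: (a =P tgt h) => [ea|na]; case: (c =P src h) => [ec|nc] /=; try by rewrite mul0mx.
by subst; rewrite !conform_mx_id.
Qed.

Lemma dblk_sblk (p_ q_ r_ : 'I_r -> nat) (D : forall k, 'M[C]_(p_ k, q_ k)) h
  (X : 'M[C]_(q_ (tgt h), r_ (src h))) :
  dblk D *m sblk X = sblk (D (tgt h) *m X).
Proof.
rewrite /sblk /dblk mul_mxblock; apply: eq_mxblock => a c.
rewrite (bigD1 a) //= big1 => [|b nb]; last by rewrite eq_sym (negPf nb) mul0mx.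
rewrite eqxx addr0.
case: (a =P tgt h) => [ea|na]; case: (c =P src h) => [ec|nc] /=; try by rewrite mulmx0.
by subst; rewrite !conform_mx_id.
Qed.

Lemma nil_transfer (v1 v2 : 'I_r -> nat) (x : Rep C Q v1) (x0 : Rep C Q v2)
  (Fm : forall k, 'M[C]_(v1 k, v2 k)) (Lm : forall k, 'M[C]_(v2 k, v1 k)) :
  (forall h, x h *m Fm (src h) *m Lm (src h) = x h) ->
  (forall h, Lm (tgt h) *m x h *m Fm (src h) = x0 h) ->
  nilpotent x0 -> nilpotent x.
Proof.
move=> H1 H2 [N HN].
pose Fb := dblk Fm; pose Lb := dblk Lm.
have B1 : forall h, bigmx x h *m Fb *m Lb = bigmx x h.
  by move=> h; rewrite /bigmx -/(sblk _) /Fb /Lb !sblk_dblk H1.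
have B2 : forall h, Lb *m bigmx x h *m Fb = bigmx x0 h.
  by move=> h; rewrite /bigmx -/(sblk _) /Fb /Lb dblk_sblk sblk_dblk H2.
have key : forall t h, foldr (fun h M => bigmx x h *m M) 1%:M (h :: t) =
    bigmx x h *m Fb *m foldr (fun h M => bigmx x0 h *m M) 1%:M t *m Lb.
  elim=> [|h' t IH] h /=; first by rewrite !mulmx1 B1.
  rewrite /= in IH; rewrite IH.
  rewrite -{1}B1 !mulmxA; congr (_ *m _); rewrite -!mulmxA; congr (_ *m (_ *m _)).
  by rewrite !mulmxA B2.
exists N.+1 => [[|h t]] // st.
by rewrite (key t h) HN ?mulmx0 ?mul0mx //; case: st.
Qed.
End Blocks.

Section RkTransfer.
Variables (R : realType) (r : nat) (Q : dgraph r).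
Local Notation C := (complex R).
Variables v1 v2 : 'I_r -> nat.
Variable j : 'I_r.

Lemma rk_transfer (x : Rep C Q v1) (x' : Rep C Q v2) (G : 'M[C]_(v2 j, v1 j)) :
  row_free G ->
  (forall h, tgt h == j -> (conform_mx (0 : 'M_(v1 (src h), v1 j)) (x h)^T :=:
                            conform_mx (0 : 'M_(v2 (src h), v2 j)) (x' h)^T *m G)%MS) ->
  rk j x = rk j x'.
Proof.
move=> fG H; rewrite /rk /RS.
have E1 : ((\sum_(h | tgt h == j) <<conform_mx (0 : 'M_(v1 (src h), v1 j)) (x h)^T>>)%MS :=:
    \sum_(h | tgt h == j) <<<<conform_mx (0 : 'M_(v2 (src h), v2 j)) (x' h)^T>> *m G>>)%MS.
  apply: eqmx_sums => h e.
  apply: eqmx_trans (genmxE _) _; apply: eqmx_trans (H h e) _.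
  apply: eqmx_sym; apply: eqmx_trans (genmxE _) _.
  by apply: eqmxMr; apply: genmxE.
rewrite E1 -(sumsmxMr_gen _ _ _) mxrankMfree //.
Qed.
End RkTransfer.

Section RkGauge.
Variables (R : realType) (r : nat) (Q : dgraph r).
Local Notation C := (complex R).
Variable v : 'I_r -> nat.
Variable g : forall k, 'M[C]_(v k).
Hypothesis gu : forall k, g k \in unitmx.
Variable j : 'I_r.

Lemma tr_conj_conform (k1 k3 k2 : 'I_r) (e : k1 = k3) (X : 'M[C]_(v k1, v k2)) n (e2 : v k2 = n) :
  conform_mx (0 : 'M_(n, v k3)) ((g k1 *m X *m invmx (g k2))^T) =
  conform_mx (0 : 'M_(n, v k2)) (invmx (g k2))^T *m conform_mx (0 : 'M_(v k2, v k3)) X^T *m (g k3)^T.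
Proof. by subst; rewrite !conform_mx_id !trmx_mul mulmxA. Qed.

Lemma rk_gact (x : Rep C Q v) : rk j (gact g x) = rk j x.
Proof.
apply: (rk_transfer (G := (g j)^T)).
  by rewrite row_free_unit unitmx_tr.
move=> h /eqP e; rewrite /gact (tr_conj_conform (k2 := src h) e) //.
rewrite conform_mx_id -mulmxA; apply: eqmxMfull.
by rewrite row_full_unit unitmx_tr unitmx_inv.
Qed.
End RkGauge.

Section Struct.
Variables (R : realType) (r : nat) (Q : dgraph r).
Local Notation C := (complex R).
Variable eps : edge Q -> C.
Variables (i : 'I_r) (c : nat) (v' : 'I_r -> nat).
Local Notation v'' := (dimC i c).
Local Notation V := (dimsum v' v'').

Lemma dimC_ne k : k != i -> dimC i c k = 0%N.
Proof. by rewrite /dimC => /negbTE ->. Qed.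

Lemma dr0 (h : edge Q) (M : 'M[C]_(v'' (tgt h), v'' (src h))) : M = 0.
Proof.
case: (eqVneq (tgt h) i) => e.
  apply: thin0; apply: dimC_ne; rewrite -e; exact: noloop.
by apply: flat0; apply: dimC_ne.
Qed.

Definition mkY (a : Rep C Q v') (w : forall h, 'M[C]_(v'' (tgt h), v' (src h))) : Rep C Q V :=
  fun h => block_mx (a h) 0 (w h) 0.

Definition Sw k (a : Rep C Q v') (w : forall h, 'M[C]_(v'' (tgt h), v' (src h))) : 'M[C]_(v'' k, v' k) :=
  \sum_(h | tgt h == k) conform_mx (0 : 'M_(v'' k, v' k))
      (eps h *: (w h *m conform_mx (0 : 'M_(v' (src h), v' (tgt h))) (a (erev h)))).

Lemma mkY_eta (y : Rep C Q V) : (forall h, ursubmx (y h) = 0) ->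
  y = mkY (fun h => ulsubmx (y h)) (fun h => dlsubmx (y h)).
Proof.
move=> H; apply: functional_extensionality_dep => h.
by rewrite /mkY -(H h) -(dr0 (drsubmx (y h))) submxK.
Qed.

Lemma mu_mkY a w k : mu eps (mkY a w) k = block_mx (mu eps a k) 0 (Sw k a w) 0.
Proof.
rewrite /mu /Sw.
have E : forall h, tgt h == k ->
  conform_mx (0 : 'M_(V k, V k)) (eps h *: (mkY a w h *m
      conform_mx (0 : 'M_(V (src h), V (tgt h))) (mkY a w (erev h)))) =
  block_mx (conform_mx (0 : 'M_(v' k, v' k)) (eps h *: (a h *m conform_mx (0 : 'M_(v' (src h), v' (tgt h))) (a (erev h))))) 0
           (conform_mx (0 : 'M_(v'' k, v' k)) (eps h *: (w h *m conform_mx (0 : 'M_(v' (src h), v' (tgt h))) (a (erev h))))) 0.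
  move=> h /eqP e; rewrite /mkY.
  rewrite (@conform_block _ _ _ _ _ (v' (src h)) (v'' (src h)) (v' (tgt h)) (v'' (tgt h)));
    try by rewrite ?tgt_rev ?src_rev.
  rewrite !conform0 mulmx_block !mulmx0 !mul0mx !addr0 scale_block_mx !scaler0.
  rewrite (@conform_block _ _ _ _ _ (v' k) (v'' k) (v' k) (v'' k)); try by rewrite e.
  by rewrite !conform0.
by rewrite (eq_bigr _ E) sum_block !big1_eq.
Qed.
End Struct.

Lemma conjH1 (F : fieldType) m n p (Gt : 'M[F]_m) (Gs : 'M[F]_n) (Y : 'M[F]_(m, n))
  (Cl : 'M[F]_(n, p)) (Rw : 'M[F]_(p, n)) :
  Gs \in unitmx -> Y *m (Cl *m Rw) = Y ->
  invmx Gt *m Y *m Gs *m (invmx Gs *m Cl) *m (Rw *m Gs) = invmx Gt *m Y *m Gs.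
Proof.
by move=> u e; rewrite !mulmxA mulmxK // -(mulmxA (invmx Gt *m Y)) -(mulmxA (invmx Gt)) e.
Qed.

Lemma conjH2 (F : fieldType) m n p q (Gt : 'M[F]_m) (Gs : 'M[F]_n) (Y : 'M[F]_(m, n))
  (Cl : 'M[F]_(n, p)) (Rw : 'M[F]_(q, m)) (X : 'M[F]_(q, p)) :
  Gt \in unitmx -> Gs \in unitmx -> Rw *m (Y *m Cl) = X ->
  Rw *m Gt *m (invmx Gt *m Y *m Gs) *m (invmx Gs *m Cl) = X.
Proof.
by move=> u1 u2 e; rewrite !mulmxA mulmxK // mulmxK // -mulmxA e.
Qed.

Section Phi.
Variables (R : realType) (r : nat) (Q : dgraph r).
Local Notation C := (complex R).
Variable eps : edge Q -> C.
Variables (i : 'I_r) (c : nat) (v' : 'I_r -> nat).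
Local Notation v'' := (dimC i c).
Local Notation V := (dimsum v' v'').
Variable g : forall k, 'M[C]_(V k).
Hypothesis gu : forall k, g k \in unitmx.
Variable w : forall h : edge Q, 'M[C]_(v'' (tgt h), v' (src h)).
Variable Cm : forall h : edge Q, 'M[C]_(v' i, v' (src h)).

Definition Mm (a : Rep C Q v') : 'M[C]_(v' i) :=
  \sum_(h | tgt h == i) eps h *: (Cm h *m conform_mx (0 : 'M_(v' (src h), v' i))
      (conform_mx (0 : 'M_(v' (src h), v' (tgt h))) (a (erev h)))).

Definition wfix (a : Rep C Q v') (h : edge Q) : 'M[C]_(v'' (tgt h), v' (src h)) :=
  \det (Mm a) *: w h - conform_mx 0 (Sw eps i a w *m \adj (Mm a) *m Cm h).

Definition Yp a := mkY a (wfix a).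

Definition phi a : Rep C Q V := gact (fun k => invmx (g k)) (Yp a).

Lemma wfix_help m n m' n' p (W : 'M[C]_(m, p)) (Kc : 'M[C]_(m', p)) (A : 'M[C]_(p, n)) e d :
  m = m' -> n = n' ->
  conform_mx (0 : 'M_(m', n')) (e *: ((d *: W - conform_mx (0 : 'M_(m, p)) Kc) *m A)) =
  d *: conform_mx (0 : 'M_(m', n')) (e *: (W *m A)) - Kc *m (e *: conform_mx (0 : 'M_(p, n')) A).
Proof.
move=> e1 e2; subst; rewrite !conform_mx_id mulmxBl scalerBr; congr (_ - _).
  by rewrite -scalemxAl !scalerA mulrC.
by rewrite scalemxAr.
Qed.

Lemma Sw_wfix a : Sw eps i a (wfix a) = 0.
Proof.
rewrite /Sw /wfix.
set K := Sw eps i a w *m \adj (Mm a).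
have E : forall h, tgt h == i ->
   conform_mx (0 : 'M_(v'' i, v' i)) (eps h *: ((\det (Mm a) *: w h -
     conform_mx (0 : 'M_(v'' (tgt h), v' (src h))) (K *m Cm h)) *m
     conform_mx (0 : 'M_(v' (src h), v' (tgt h))) (a (erev h)))) =
   \det (Mm a) *: conform_mx (0 : 'M_(v'' i, v' i)) (eps h *: (w h *m
     conform_mx (0 : 'M_(v' (src h), v' (tgt h))) (a (erev h)))) -
   K *m (eps h *: (Cm h *m conform_mx (0 : 'M_(v' (src h), v' i))
      (conform_mx (0 : 'M_(v' (src h), v' (tgt h))) (a (erev h))))).
  move=> h /eqP e.
  rewrite wfix_help; [|by rewrite e|by rewrite e].
  by congr (_ - _); rewrite -mulmxA scalemxAr.
rewrite (eq_bigr _ E) sumrB -scaler_sumr -mulmx_sumr -/(Sw eps i a w) -/(Mm a).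
by rewrite /K -mulmxA mul_adj_mx mul_mx_scalar subrr.
Qed.

Lemma mu_Yp a : Lambda eps a -> forall k, mu eps (Yp a) k = 0.
Proof.
move=> [_ Hmu] k; rewrite /Yp mu_mkY Hmu.
case: (eqVneq k i) => [->|nk]; first by rewrite Sw_wfix block_mx0.
by rewrite (flat0 (dimC_ne c nk) (Sw _ _ _ _)) block_mx0.
Qed.

Lemma phiE a h : phi a h = invmx (g (tgt h)) *m Yp a h *m g (src h).
Proof. by rewrite /phi /gact invmxK. Qed.

Lemma Lambda_phi a : Lambda eps a -> Lambda eps (phi a).
Proof.
move=> La; split; last first.
  move=> k; rewrite /phi mu_gact; last by move=> k'; rewrite unitmx_inv.
  by rewrite mu_Yp // mulmx0 mul0mx.
case: La => nila _.
apply: (@nil_transfer _ _ _ _ _ _ a (fun k => invmx (g k) *m col_mx 1%:M 0)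
                                  (fun k => row_mx 1%:M 0 *m g k)) => // h.
  rewrite phiE; apply: conjH1 => //.
  by rewrite /Yp /mkY mul_col_row mulmx_block !(mulmx1, mul1mx, mulmx0, mul0mx, addr0).
rewrite phiE; apply: conjH2 => //.
by rewrite /Yp /mkY mul_block_col mul_row_col !(mulmx1, mul1mx, mulmx0, mul0mx, addr0).
Qed.

End Phi.

Section Phi2.
Variables (R : realType) (r : nat) (Q : dgraph r).
Local Notation C := (complex R).
Variable eps : edge Q -> C.
Variables (i : 'I_r) (c : nat) (v' : 'I_r -> nat).
Local Notation v'' := (dimC i c).
Local Notation V := (dimsum v' v'').
Variable g : forall k, 'M[C]_(V k).
Hypothesis gu : forall k, g k \in unitmx.
Variable w : forall h : edge Q, 'M[C]_(v'' (tgt h), v' (src h)).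
Variable Cm : forall h : edge Q, 'M[C]_(v' i, v' (src h)).

Local Notation phi := (phi eps g w Cm).
Local Notation Yp := (Yp eps w Cm).
Local Notation Mm := (Mm eps Cm).
Local Notation wfix := (wfix eps w Cm).

Lemma gact_phi a : gact g (phi a) = Yp a.
Proof. exact: gactKV. Qed.

Lemma Lambda_triv (z : Rep C Q v'') : Lambda eps z.
Proof.
have z0 : forall h, z h = 0 by move=> h; apply: dr0.
split.
  have b0 : forall h, bigmx z h = 0.
    move=> h; rewrite /bigmx -[RHS](mxblock0 (p_ := v'') (q_ := v'')).
    by apply: eq_mxblock => a' b'; rewrite z0 conform0; case: ifP.
  exists 1%N => [[|h [|h' t]]] // _ /=.
  by rewrite b0 mul0mx.
move=> k; rewrite /mu big1 // => h _.
by rewrite z0 mul0mx scaler0 conform0.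
Qed.

Lemma phi_in_S (Z0 : Rep C Q v' -> Prop) a :
  Z0 a -> Lambda_ip eps i 0 a ->
  qrp_inv eps (fun x => Z0 x /\ Lambda_ip eps i 0 x) (@Lambda _ _ _ eps (dimC i c)) (phi a).
Proof.
move=> Za La; split; first by apply: Lambda_phi => //; case: La.
exists g; split; first exact: gu.
rewrite gact_phi; split.
  by move=> h; rewrite /Yp /mkY block_mxKur.
split; last exact: Lambda_triv.
have e : forall h, ulsubmx (Yp a h) = a h by move=> h; rewrite /Yp /mkY block_mxKul.
by rewrite (functional_extensionality_dep _ _ e).
Qed.

Lemma rk_block (j : 'I_r) (hj : j != i) (y : Rep C Q V) :
  (forall h, ursubmx (y h) = 0) -> rk j y = rk j (fun h => ulsubmx (y h)).
Proof.
move=> hur; apply: (rk_transfer (G := row_mx 1%:M 0)).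
  by apply/row_freeP; exists (col_mx 1%:M 0); rewrite mul_row_col mulmx1 mulmx0 addr0.
move=> h /eqP e.
rewrite -[y h]submxK (hur h) tr_block_mx.
rewrite (@conform_block _ _ _ _ _ (v' (src h)) (v'' (src h)) (v' j) (v'' j)) //; last 2 first.
  by rewrite e.
  by rewrite e.
rewrite (thin0 (dimC_ne c hj) (conform_mx _ (dlsubmx (y h))^T)).
rewrite (thin0 (dimC_ne c hj) (conform_mx _ (drsubmx (y h))^T)) trmx0 conform0 block_mxKul.
rewrite mul_mx_row mulmx1 mulmx0 /block_mx row_mx0.
apply: eqmx_trans (eqmx_sym (addsmxE _ _)) _; exact: addsmx0.
Qed.

Lemma rk_phi (j : 'I_r) (hj : j != i) a : rk j (phi a) = rk j a.
Proof.
rewrite -(rk_gact gu) gact_phi rk_block //; last by move=> h; rewrite /Yp /mkY block_mxKur.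
congr (rk j _); apply: functional_extensionality_dep => h.
by rewrite /Yp /mkY block_mxKul.
Qed.

Lemma phi_at (x : Rep C Q V) : Lambda eps x ->
  (forall h, ursubmx (gact g x h) = 0) ->
  (forall h, w h = dlsubmx (gact g x h)) ->
  Mm (fun h => ulsubmx (gact g x h)) = 1%:M ->
  phi (fun h => ulsubmx (gact g x h)) = x.
Proof.
move=> [_ Hmu] hur hw hM.
set y := gact g x.
have ey := mkY_eta hur; rewrite -/y in ey.
have ew : w = (fun h => dlsubmx (y h)).
  by apply: functional_extensionality_dep => h; exact: hw.
have Sw0 : Sw eps i (fun h => ulsubmx (y h)) w = 0.
  have Hm := mu_gact eps gu x i.
  rewrite Hmu mulmx0 mul0mx -/y ey mu_mkY in Hm.
  have H0 : dlsubmx (0 : 'M[C]_(v' i + v'' i)) = 0 by apply/matrixP => a b; rewrite !mxE.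
  move/(congr1 dlsubmx): Hm; rewrite block_mxKdl H0 => H.
  by rewrite ew.
rewrite /phi /Yp.
have -> : mkY (fun h => ulsubmx (y h)) (wfix (fun h => ulsubmx (y h))) = y.
  rewrite {3}ey; congr (mkY _ _); apply: functional_extensionality_dep => h.
  by rewrite /wfix hM det1 scale1r Sw0 !mul0mx conform0 subr0 hw.
exact: gactK.
Qed.
End Phi2.

From mathcomp Require Import zify.

Section ExC.
Variables (R : realType) (r : nat) (Q : dgraph r).
Local Notation C := (complex R).
Variable eps : edge Q -> C.
Hypothesis eps_nz : forall h, eps h != 0.
Variables (i : 'I_r) (v' : 'I_r -> nat).

Lemma cc_ker l m n p q k (u : 'M[C]_(l, k)) (A : 'M[C]_(m, n)) : m = p -> n = q -> n = k ->
  u *m (conform_mx (0 : 'M_(p, k)) (conform_mx (0 : 'M_(p, q)) A))^T = 0 ->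
  u *m conform_mx (0 : 'M_(k, m)) A^T = 0.
Proof. by move=> e1 e2 e3; subst; rewrite !conform_mx_id. Qed.

Lemma exC (a : Rep C Q v') : ker_dim a i = 0%N ->
  exists Cm : forall h : edge Q, 'M[C]_(v' i, v' (src h)), Mm eps Cm a = 1%:M.
Proof.
move=> hk.
pose Ah h : 'M[C]_(v' (src h), v' i) := conform_mx (0 : 'M_(v' (src h), v' i))
      (conform_mx (0 : 'M_(v' (src h), v' (tgt h))) (a (erev h))).
pose N := (\sum_(h | tgt h == i) <<Ah h>>)%MS.
have fN : row_full N.
  apply: contraT => nf.
  pose u := kermx N^T.
  have ru : (0 < \rank u)%N.
    rewrite mxrank_ker mxrank_tr subn_gt0 ltn_neqAle rank_leq_col andbT.
    by move: nf; rewrite /row_full.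
  have key : forall h, tgt h == i -> u *m (Ah h)^T = 0.
    move=> h th; have : (<<Ah h>> <= N)%MS := sumsmx_sup h th (submx_refl _).
    rewrite genmxE => /submxP [D ->].
    by rewrite trmx_mul mulmxA mulmx_ker mul0mx.
  have : (u <= \bigcap_(h | src h == i) kermx (conform_mx (0 : 'M_(v' i, v' (tgt h))) (a h)^T))%MS.
    apply/sub_bigcapmxP => e se; rewrite sub_kermx.
    have := key (erev e); rewrite tgt_rev se => /(_ isT).
    rewrite /Ah; move: (Defs.revK e); move: (erev (erev e)) => e' E; subst e'.
    move/cc_ker => -> //; first by rewrite src_rev.
      by rewrite tgt_rev.
    by move/eqP: se => ->.
  move/mxrankS; rewrite /ker_dim in hk; rewrite hk leqn0 => /eqP r0.
  by rewrite r0 in ru.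
have : (1%:M <= N)%MS by apply: submx_full.
case/sub_sumsmxP => U eU.
have eD : forall h, exists D : 'M[C]_(v' i, v' (src h)), (<<Ah h>>)%MS == D *m Ah h.
  move=> h; have /submxP [D eD] : (<<Ah h>> <= Ah h)%MS by rewrite genmxE.
  by exists D; rewrite eD.
exists (fun h => (eps h)^-1 *: (U h *m xchoose (eD h))).
rewrite /Mm eU; apply: eq_bigr => h _.
move: (eqP (xchooseP (eD h))); move: (xchoose (eD h)) => D ->.
rewrite -/(Ah h) -scalemxAl scalerA mulfV // scale1r mulmxA //.
Qed.
End ExC.

From mathcomp Require Import zify.

Lemma max_exists (P : nat -> Prop) b : (exists n, P n) -> (forall n, P n -> (n <= b)%N) ->
  exists m, P m /\ forall n, P n -> (n <= m)%N.
Proof.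
elim: b => [|b IH] [n Pn] Hb.
  exists n; split => // k Pk; have := Hb k Pk; have := Hb n Pn; lia.
case: (classic (P b.+1)) => Pb.
  by exists b.+1; split.
apply: IH; first by exists n.
move=> k Pk; have := Hb k Pk; rewrite leq_eqVlt => /orP [/eqP e|]; last by [].
by subst k.
Qed.

Section Glue.
Variables (R : realType) (r : nat) (Q : dgraph r).
Local Notation C := (complex R).
Variable v : 'I_r -> nat.
Local Notation Rp := (Rep C Q v).

Lemma zclosed_iff (T T' : Rp -> Prop) : zclosed T -> (forall x, T x <-> T' x) -> zclosed T'.
Proof.
move=> [F [pF hF]] e; exists F; split => // x; rewrite -e; exact: hF.
Qed.

Lemma closed_rk_lt j m : zclosed (fun x : Rp => (rk j x < m)%N).
Proof.
case: m => [|m].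
  by apply: (zclosed_iff (@zclosed_empty _ _ _ v)) => x; split => //; rewrite ltn0.
by apply: (zclosed_iff (@closed_rk_le _ _ _ v j m)) => x; rewrite ltnS.
Qed.

Lemma irr_cover (Z Dn T L : Rp -> Prop) : irreducible Z -> zclosed T -> zclosed L ->
  dense_in Dn Z -> (exists x, Z x /\ ~ L x) -> (forall x, Dn x -> ~ L x -> T x) ->
  forall x, Z x -> T x.
Proof.
move=> [_ irr] cT cL dD [x0 [Zx0 nL]] H.
have cov : forall x, Z x -> T x \/ L x.
  move=> x Zx; apply: (zcl_min (zclosed_union cT cL) _ (dD x Zx)) => y Dy.
  case: (classic (L y)) => Ly; [by right | by left; apply: H].
case: (irr T L cT cL cov) => // HL.
by case: nL; apply: HL.
Qed.
End Glue.

Section PhiPoly.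
Variables (R : realType) (r : nat) (Q : dgraph r).
Local Notation C := (complex R).
Variable eps : edge Q -> C.
Variables (i : 'I_r) (c : nat) (v' : 'I_r -> nat).
Local Notation v'' := (dimC i c).
Local Notation V := (dimsum v' v'').
Variable g : forall k, 'M[C]_(V k).
Hypothesis gu : forall k, g k \in unitmx.
Variable w : forall h : edge Q, 'M[C]_(v'' (tgt h), v' (src h)).
Variable Cm : forall h : edge Q, 'M[C]_(v' i, v' (src h)).

Lemma pmx_Mm : pmx (fun z : Rep C Q v' => Mm eps Cm z).
Proof.
apply: pmx_sum => h; apply: pmx_scale; first exact: pf_const.
apply: pmx_mul; first exact: pmx_const.
by apply: pmx_conform; apply: pmx_conform; apply: pmx_coord.
Qed.

Lemma pmx_Sw k : pmx (fun z : Rep C Q v' => Sw eps k z w).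
Proof.
apply: pmx_sum => h; apply: pmx_conform; apply: pmx_scale; first exact: pf_const.
apply: pmx_mul; first exact: pmx_const.
by apply: pmx_conform; apply: pmx_coord.
Qed.

Lemma phi_poly h a0 b0 : polyfun (fun z : Rep C Q v' => phi eps g w Cm z h a0 b0).
Proof.
have P : pmx (fun z : Rep C Q v' => invmx (g (tgt h)) *m Yp eps w Cm z h *m g (src h)).
  apply: pmx_mul; last exact: pmx_const.
  apply: pmx_mul; first exact: pmx_const.
  rewrite /Yp /mkY; apply: pmx_block; try exact: pmx_const; first exact: pmx_coord.
  rewrite /wfix; apply: pmx_add.
    by apply: pmx_scale; [apply: pmx_det; exact: pmx_Mm | exact: pmx_const].
  apply: pmx_opp; apply: pmx_conform.
  apply: pmx_mul; last exact: pmx_const.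
  by apply: pmx_mul; [exact: pmx_Sw | apply: pmx_adj; exact: pmx_Mm].
by apply: (polyfun_ext (P a0 b0)) => z; rewrite phiE.
Qed.
End PhiPoly.

From mathcomp Require Import zify.

Theorem lemma6p4 (R : realType) (r : nat) (Q : dgraph r)
  (eps : edge Q -> complex R)
  (eps_nz : forall h, eps h != 0)
  (eps_rev : forall h, eps h + eps (erev h) = 0)
  (i j : 'I_r) (hij : i != j)
  (v' : 'I_r -> nat) (Z0 : Rep (complex R) Q v' -> Prop)
  (hZ0 : irr_component (v := v') (Lambda eps (v := v')) Z0)
  (ht : tstar_is eps i Z0 0)
  (c : nat) :
  forall p : nat,
    t_is eps j (eta_star eps i c Z0) p <-> t_is eps j Z0 p.
Proof.
have hji : j != i by rewrite eq_sym.
case: hZ0 => irrZ0 [Z0L _].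
have Z0ne := proj1 irrZ0.
have [mstar [[xs [Zxs rxs]] mmax]] : exists m, (exists x, Z0 x /\ rk j x = m) /\
    (forall n, (exists x, Z0 x /\ rk j x = n) -> (n <= m)%N).
  apply: (max_exists (b := v' j)).
    by case: Z0ne => x Zx; exists (rk j x), x.
  by move=> n [x [_ <-]]; apply: rk_le.
have rkZ : forall x, Z0 x -> (rk j x <= mstar)%N by move=> x Zx; apply: mmax; exists x.
pose D := fun x => Z0 x /\ Lambda_ip eps i 0 x.
pose low := fun x : Rep (complex R) Q v' => (rk j x < mstar)%N.
have clow : zclosed low := closed_rk_lt _ _ v' j mstar.
have nlow_xs : exists x, Z0 x /\ ~ low x by exists xs; rewrite /low rxs ltnn.
have [as_ [Das nlas]] : exists a, D a /\ ~ low a.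
  apply: NNPP => Hn.
  have : low xs.
    apply: (zcl_min clow _ (ht xs Zxs)) => y Dy.
    by apply: NNPP => nl; apply: Hn; exists y.
  by rewrite /low rxs ltnn.
have ras : rk j as_ = mstar.
  have := rkZ as_ (proj1 Das); move: nlas; rewrite /low; lia.
have eVj : dimsum v' (dimC i c) j = v' j by rewrite /dimsum dimC_ne // addn0.
pose S := qrp_inv eps (fun x => Z0 x /\ Lambda_ip eps i 0 x) (@Lambda _ _ _ eps (dimC i c)).
have rkS : forall s, S s -> exists a, D a /\ rk j s = rk j a.
  move=> s [Ls [g [gu [hur [Aa _]]]]].
  exists (fun h => ulsubmx (gact g s h)); split => //.
  by rewrite -(rk_gact gu j s) (rk_block hji).
have etab : forall x, zcl S x -> (rk j x <= mstar)%N.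
  apply: zcl_min; first exact: closed_rk_le.
  by move=> s /rkS [a [[Za _] ->]]; apply: rkZ.
pose g1 := fun k => (1%:M : 'M[complex R]_(dimsum v' (dimC i c) k)).
have g1u : forall k, g1 k \in unitmx by move=> k; exact: unitmx1.
pose ss := phi eps g1 (fun h => 0) (fun h => 0) as_.
have Sss : S ss := phi_in_S g1u _ _ (proj1 Das) (proj2 Das).
have rss : rk j ss = mstar by rewrite /ss (rk_phi _ g1u) // ras.
have codimV : forall x : Rep (complex R) Q (dimsum v' (dimC i c)), im_codim x j = (v' j - rk j x)%N.
  by move=> x; rewrite im_codimE eVj.
have codim' : forall x : Rep (complex R) Q v', im_codim x j = (v' j - rk j x)%N by [].
have rkV : forall x : Rep (complex R) Q (dimsum v' (dimC i c)), (rk j x <= v' j)%N.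
  by move=> x; rewrite -eVj; apply: rk_le.
pose pstar := (v' j - mstar)%N.
have CZ : forall p, t_is eps j Z0 p <-> p = pstar.
  move=> p; split.
    move=> H; have [y [Zy [Ly cy]]] := zcl_nonempty (H xs Zxs).
    have sub : forall x, Z0 x -> (rk j x <= v' j - p)%N.
      move=> x Zx; apply: (zcl_min (closed_rk_le _ _ _ _ _) _ (H x Zx)) => z [Zz [Lz cz]].
      rewrite codim' in cz; have := rk_le j z; rewrite /=; lia.
    have := sub xs Zxs; have := rkZ y Zy; rewrite codim' in cy; rewrite rxs.
    have := rk_le j y; rewrite /pstar; lia.
  move=> -> x Zx.
  apply: (irr_cover irrZ0 (zcl_closed _) clow (fun y Zy => zcl_sub Zy) nlow_xs _ Zx).
  move=> y Zy nly; apply: zcl_sub; split => //; split; first exact: Z0L.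
  rewrite codim'; have := rkZ y Zy; move: nly; rewrite /low /pstar; lia.
have CE : forall p, t_is eps j (eta_star eps i c Z0) p <-> p = pstar.
  move=> p; rewrite /t_is /dense_in /eta_star -/S; split.
    move=> H; have [y [Ey [Ly cy]]] := zcl_nonempty (H ss (zcl_sub Sss)).
    have sub : forall x, zcl S x -> (rk j x <= v' j - p)%N.
      move=> x Ex; apply: (zcl_min (closed_rk_le _ _ _ _ _) _ (H x Ex)) => z [_ [_ cz]].
      rewrite codimV in cz; have := rkV z; lia.
    have := sub ss (zcl_sub Sss); have := etab y Ey; rewrite codimV in cy; rewrite rss.
    have := rkV y; rewrite /pstar; lia.
  move=> -> x Ex.
  apply: (zcl_min (zcl_closed _) _ Ex) => s Ss.
  case: (Ss) => Ls [g [gu [hur [[Za La] _]]]].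
  have [Cm hM] := exC eps_nz (proj2 La).
  pose w := fun h => dlsubmx (gact g s h).
  rewrite -(phi_at gu Ls hur (w := w) (fun h => erefl) hM).
  have cT := zclosed_preim (@phi_poly _ _ _ eps _ _ _ g w Cm)
                (zcl_closed (fun x => zcl S x /\ Lambda_jp eps j (v' j - mstar) x)).
  apply: (irr_cover irrZ0 cT clow ht nlow_xs _ Za).
  move=> z [Zz Lz] nlz; apply: zcl_sub; split.
    by apply: zcl_sub; apply: phi_in_S.
  split; first by apply: Lambda_phi => //; case: Lz.
  rewrite codimV (rk_phi _ gu) //; have := rkZ z Zz; move: nlz; rewrite /low; lia.
by move=> p; rewrite CE CZ.
Qed.
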